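(* $i(\vec P_3)\leq 0.4446$ and $i(\vec C_4)\leq 0.1104$.
   Context: An orgraph (oriented graph) is a directed graph with no loops, no multiple edges, and no pair of vertices joined by edges in both directions. For a finite orgraph $\Gamma$ and an integer $n$, let $max(\Gamma;n)$ be the maximum, over all orgraphs $G$ on $n$ vertices, of the number of vertex subsets $T\subseteq V(G)$ with $|T|=|V(\Gamma)|$ such that the subgraph of $G$ induced by $T$ is isomorphic to $\Gamma$ (each such set is counted once, regardless of automorphisms of $\Gamma$). The inducibility of $\Gamma$ is $i(\Gamma):=\limsup_{n\to\infty} max(\Gamma;n)/\binom{n}{|V(\Gamma)|}$. Here $\vec P_3$ is the orgraph on vertices $a,b,c$ with edges $a\to b$ and $b\to c$ only (directed path with 3 vertices), and $\vec C_4$ is the orgraph on vertices $v_1,v_2,v_3,v_4$ with edges $v_1\to v_2$, $v_2\to v_3$, $v_3\to v_4$, $v_4\to v_1$ only (directed 4-cycle). *)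

(* Defs.v *)
From HB Require Import structures.
From mathcomp Require Import all_boot all_order all_algebra.
From mathcomp Require Import all_classical all_reals all_analysis.
Set Implicit Arguments. Unset Strict Implicit. Unset Printing Implicit Defensive.
Import Order.TTheory GRing.Theory Num.Theory.

(* An orgraph on vertex set 'I_n is given by its set of directed edges
   (ordered pairs); it must have no loops and no pair of opposite edges.
   Multiple edges are impossible since edges form a set. *)
Definition digraph (n : nat) := {set 'I_n * 'I_n}.

Definition is_orgraph (n : nat) (G : digraph n) : bool :=
  [forall i : 'I_n, forall j : 'I_n,
     ((i, j) \in G) ==> ((i != j) && ((j, i) \notin G))].

Definition induces_copy (k n : nat) (Gam : digraph k) (G : digraph n)
  (T : {set 'I_n}) : bool :=
  [exists f : {ffun 'I_k -> 'I_n},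
     [&& injectiveb f, (f @: [set: 'I_k]) == T &
      [forall i : 'I_k, forall j : 'I_k, ((f i, f j) \in G) == ((i, j) \in Gam)]]].

Definition ind_count (k n : nat) (Gam : digraph k) (G : digraph n) : nat :=
  #|[set T : {set 'I_n} | (#|T| == k) && induces_copy Gam G T]|.

Definition max_ind (k : nat) (Gam : digraph k) (n : nat) : nat :=
  \max_(G : digraph n | is_orgraph G) ind_count Gam G.

Local Open Scope ring_scope.
Local Open Scope ereal_scope.

Definition inducibility (R : realType) (k : nat) (Gam : digraph k) : \bar R :=
  limn_esup (fun n : nat => ((max_ind Gam n)%:R / ('C(n, k))%:R : R)%:E).

Definition P3 : digraph 3 := [set ((inord 0 : 'I_3), (inord 1 : 'I_3));
                                  ((inord 1 : 'I_3), (inord 2 : 'I_3))].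

Definition C4 : digraph 4 := [set ((inord 0 : 'I_4), (inord 1 : 'I_4));
                                  ((inord 1 : 'I_4), (inord 2 : 'I_4));
                                  ((inord 2 : 'I_4), (inord 3 : 'I_4));
                                  ((inord 3 : 'I_4), (inord 0 : 'I_4))].

(* Main.v *)
Require Import Defs.
From HB Require Import structures.
From mathcomp Require Import all_boot all_order all_algebra.
From mathcomp Require Import all_classical all_reals all_analysis.
From Stdlib Require Import ZArith Lia.
Set Implicit Arguments. Unset Strict Implicit. Unset Printing Implicit Defensive.

(* Proof strategy: a flag-algebra style certificate on 4-vertex orgraphs.
   For every orgraph G on n vertices and every 4-tuple w of vertices we define an
   integer F(w) = 6*D*[target pattern on w] + Q-term, where the Q-term is built from
   integer sums of squares (so that its sum over all tuples is >= 0).  A finite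
   computation (chk_p3 / chk_c4) shows that the average of F over the 24 reorderings
   of every 4-vertex pattern is bounded by L.  Summing gives
   max(P3;n) <= 0.40745 * n^3/6 and max(C4;n) <= 0.1031 * n^4/24, whence the bounds. *)

HB.instance Definition _ := Monoid.isComLaw.Build Z 0%Z Z.add Z.add_assoc Z.add_comm Z.add_0_l.
HB.instance Definition _ := Monoid.isMulLaw.Build Z 0%Z Z.mul Z.mul_0_l Z.mul_0_r.
HB.instance Definition _ := Monoid.isAddLaw.Build Z Z.mul Z.add Z.mul_add_distr_r Z.mul_add_distr_l.

Notation "\zsum_ ( i <- r ) F" := (\big[Z.add/0%Z]_(i <- r) F)
  (at level 41, F at level 41, i, r at level 50).
Notation "\zsum_ ( i : t ) F" := (\big[Z.add/0%Z]_(i : t) F)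
  (at level 41, F at level 41, i at level 50).
Notation "\zsum_ i F" := (\big[Z.add/0%Z]_i F)
  (at level 41, F at level 41, i at level 0, right associativity).

Lemma zsum_le (I : Type) (r : seq I) (P : pred I) (F1 F2 : I -> Z) :
  (forall i, P i -> (F1 i <= F2 i)%Z) ->
  (\big[Z.add/0%Z]_(i <- r | P i) F1 i <= \big[Z.add/0%Z]_(i <- r | P i) F2 i)%Z.
Proof.
move=> H; apply: (big_ind2 (fun x y => (x <= y)%Z)); [lia | | exact: H].
by move=> x1 x2 y1 y2 ? ?; lia.
Qed.

Lemma zsum_ge0 (I : Type) (r : seq I) (P : pred I) (F : I -> Z) :
  (forall i, P i -> (0 <= F i)%Z) -> (0 <= \big[Z.add/0%Z]_(i <- r | P i) F i)%Z.
Proof.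
move=> H; apply: (big_ind (fun x => (0 <= x)%Z)); [lia | | exact: H].
by move=> x y ? ?; lia.
Qed.

Lemma zsum_const_seq (I : Type) (r : seq I) (c : Z) :
  \big[Z.add/0%Z]_(i <- r) c = (Z.of_nat (size r) * c)%Z.
Proof.
elim: r => [|x r IH]; first by rewrite big_nil.
rewrite big_cons IH; change (size (x :: r)) with (size r).+1.
rewrite Nat2Z.inj_succ Z.mul_succ_l; lia.
Qed.

Lemma zsum_const (I : finType) (c : Z) :
  \big[Z.add/0%Z]_(i : I) c = (Z.of_nat #|I| * c)%Z.
Proof.
rewrite big_const; elim: #|I| => [|k IH]; first by [].
rewrite iterS IH Nat2Z.inj_succ Z.mul_succ_l; lia.
Qed.

Lemma zsum_nat (I : Type) (r : seq I) (P : pred I) (F : I -> nat) :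
  Z.of_nat (\sum_(i <- r | P i) F i) = \big[Z.add/0%Z]_(i <- r | P i) Z.of_nat (F i).
Proof. by apply: (big_morph Z.of_nat) => // x y; rewrite -Nat2Z.inj_add. Qed.

Section SumFfun.
Variables (R : Type) (idx : R) (op : Monoid.com_law idx) (V : finType).

Lemma sum_ffun4 (h : V -> V -> V -> V -> R) :
  \big[op/idx]_(w : {ffun 'I_4 -> V})
      h (w (inord 0)) (w (inord 1)) (w (inord 2)) (w (inord 3)) =
  \big[op/idx]_a \big[op/idx]_b \big[op/idx]_c \big[op/idx]_d h a b c d.
Proof.
have E1 : forall a b, \big[op/idx]_c \big[op/idx]_d h a b c d =
    \big[op/idx]_(p : V * V) h a b p.1 p.2 by move=> a b; rewrite pair_bigA.
have E2 : forall a, \big[op/idx]_b \big[op/idx]_c \big[op/idx]_d h a b c d =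
    \big[op/idx]_(p : V * (V * V)) h a p.1 p.2.1 p.2.2.
  by move=> a; under eq_bigr => b _ do rewrite E1; rewrite pair_bigA.
under eq_bigr => a _ do rewrite E2.
rewrite pair_bigA /=.
pose g (p : V * (V * (V * V))) : {ffun 'I_4 -> V} :=
  [ffun i : 'I_4 => match nat_of_ord i with 0 => p.1 | 1 => p.2.1 | 2 => p.2.2.1 | _ => p.2.2.2 end].
pose f (w : {ffun 'I_4 -> V}) := (w (inord 0), (w (inord 1), (w (inord 2), w (inord 3)))).
have gK : cancel g f.
  by case=> a [b [c d]]; rewrite /f /g !ffunE !inordK.
have fK : cancel f g.
  move=> w; apply/ffunP => i; rewrite /f /g ffunE.
  case: i => [[|[|[|[|k]]]] Hi] /=; try by congr (w _); apply: val_inj; rewrite /= inordK.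
rewrite (reindex g) /=; last by exists f => x _; [apply: gK | apply: fK].
apply: eq_bigr => p _; rewrite /g !ffunE !inordK //.
Qed.

Lemma sum_ffun3 (h : V -> V -> V -> R) :
  \big[op/idx]_(w : {ffun 'I_3 -> V}) h (w (inord 0)) (w (inord 1)) (w (inord 2)) =
  \big[op/idx]_a \big[op/idx]_b \big[op/idx]_c h a b c.
Proof.
have E1 : forall a, \big[op/idx]_b \big[op/idx]_c h a b c =
    \big[op/idx]_(p : V * V) h a p.1 p.2 by move=> a; rewrite pair_bigA.
under eq_bigr => a _ do rewrite E1.
rewrite pair_bigA /=.
pose g (p : V * (V * V)) : {ffun 'I_3 -> V} :=
  [ffun i : 'I_3 => match nat_of_ord i with 0 => p.1 | 1 => p.2.1 | _ => p.2.2 end].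
pose f (w : {ffun 'I_3 -> V}) := (w (inord 0), (w (inord 1), w (inord 2))).
have gK : cancel g f by case=> a [b c]; rewrite /f /g !ffunE !inordK.
have fK : cancel f g.
  move=> w; apply/ffunP => i; rewrite /f /g ffunE.
  case: i => [[|[|[|k]]] Hi] /=; try by congr (w _); apply: val_inj; rewrite /= inordK.
rewrite (reindex g) /=; last by exists f => x _; [apply: gK | apply: fK].
apply: eq_bigr => p _; rewrite /g !ffunE !inordK //.
Qed.
End SumFfun.

Definition p3_blk0 : seq (Z * seq Z) :=
  [:: (37%Z, [:: (0)%Z; (3)%Z; (3)%Z; (-3)%Z; (0)%Z; (0)%Z; (-3)%Z; (0)%Z; (0)%Z]);
     (3%Z, [:: (0)%Z; (10)%Z; (10)%Z; (-10)%Z; (0)%Z; (0)%Z; (-10)%Z; (0)%Z; (0)%Z]);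
     (899%Z, [:: (0)%Z; (0)%Z; (1)%Z; (0)%Z; (0)%Z; (0)%Z; (-1)%Z; (0)%Z; (0)%Z]);
     (45%Z, [:: (-5)%Z; (1)%Z; (1)%Z; (1)%Z; (3)%Z; (1)%Z; (1)%Z; (1)%Z; (3)%Z]);
     (1800%Z, [:: (0)%Z; (0)%Z; (0)%Z; (0)%Z; (0)%Z; (1)%Z; (0)%Z; (-1)%Z; (0)%Z]);
     (6757%Z, [:: (0)%Z; (0)%Z; (0)%Z; (1)%Z; (0)%Z; (0)%Z; (-1)%Z; (0)%Z; (0)%Z]);
     (27%Z, [:: (0)%Z; (-3)%Z; (3)%Z; (3)%Z; (0)%Z; (10)%Z; (-3)%Z; (-10)%Z; (0)%Z]);
     (111%Z, [:: (0)%Z; (-2)%Z; (2)%Z; (2)%Z; (0)%Z; (5)%Z; (-2)%Z; (-5)%Z; (0)%Z]);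
     (4%Z, [:: (0)%Z; (10)%Z; (-10)%Z; (-10)%Z; (0)%Z; (7)%Z; (10)%Z; (-7)%Z; (0)%Z]);
     (25%Z, [:: (-4)%Z; (-5)%Z; (-5)%Z; (-5)%Z; (1)%Z; (4)%Z; (-5)%Z; (5)%Z; (1)%Z]);
     (18%Z, [:: (0)%Z; (5)%Z; (-5)%Z; (-5)%Z; (0)%Z; (3)%Z; (5)%Z; (-3)%Z; (0)%Z]);
     (51%Z, [:: (0)%Z; (3)%Z; (-3)%Z; (-3)%Z; (0)%Z; (2)%Z; (3)%Z; (-2)%Z; (0)%Z]);
     (52%Z, [:: (-7)%Z; (-10)%Z; (-10)%Z; (-10)%Z; (2)%Z; (9)%Z; (-10)%Z; (9)%Z; (2)%Z]);
     (1458%Z, [:: (0)%Z; (1)%Z; (0)%Z; (0)%Z; (0)%Z; (0)%Z; (-1)%Z; (0)%Z; (0)%Z]);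
     (1458%Z, [:: (0)%Z; (0)%Z; (1)%Z; (-1)%Z; (0)%Z; (0)%Z; (0)%Z; (0)%Z; (0)%Z]);
     (899%Z, [:: (0)%Z; (1)%Z; (0)%Z; (-1)%Z; (0)%Z; (0)%Z; (0)%Z; (0)%Z; (0)%Z]);
     (11%Z, [:: (0)%Z; (5)%Z; (5)%Z; (-5)%Z; (0)%Z; (0)%Z; (-5)%Z; (0)%Z; (0)%Z]);
     (6757%Z, [:: (0)%Z; (1)%Z; (-1)%Z; (0)%Z; (0)%Z; (0)%Z; (0)%Z; (0)%Z; (0)%Z]);
     (307%Z, [:: (0)%Z; (-1)%Z; (1)%Z; (1)%Z; (0)%Z; (3)%Z; (-1)%Z; (-3)%Z; (0)%Z])].

Definition p3_blk1 : seq (Z * seq Z) :=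
  [:: (29%Z, [:: (8)%Z; (-1)%Z; (0)%Z; (0)%Z; (-5)%Z; (8)%Z; (-1)%Z; (-10)%Z; (-5)%Z]);
     (20%Z, [:: (-2)%Z; (0)%Z; (-3)%Z; (-3)%Z; (1)%Z; (3)%Z; (0)%Z; (0)%Z; (1)%Z]);
     (53%Z, [:: (0)%Z; (-2)%Z; (-3)%Z; (3)%Z; (5)%Z; (0)%Z; (2)%Z; (0)%Z; (-5)%Z]);
     (15275%Z, [:: (0)%Z; (0)%Z; (0)%Z; (0)%Z; (0)%Z; (0)%Z; (0)%Z; (1)%Z; (0)%Z]);
     (189%Z, [:: (0)%Z; (3)%Z; (-1)%Z; (1)%Z; (0)%Z; (0)%Z; (-3)%Z; (0)%Z; (0)%Z]);
     (25%Z, [:: (0)%Z; (-3)%Z; (-5)%Z; (5)%Z; (10)%Z; (0)%Z; (3)%Z; (0)%Z; (-10)%Z]);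
     (59%Z, [:: (0)%Z; (1)%Z; (3)%Z; (-3)%Z; (2)%Z; (0)%Z; (-1)%Z; (0)%Z; (-2)%Z]);
     (131%Z, [:: (0)%Z; (-1)%Z; (-2)%Z; (2)%Z; (3)%Z; (0)%Z; (1)%Z; (0)%Z; (-3)%Z]);
     (17%Z, [:: (0)%Z; (1)%Z; (5)%Z; (-5)%Z; (3)%Z; (0)%Z; (-1)%Z; (0)%Z; (-3)%Z]);
     (141%Z, [:: (-7)%Z; (-8)%Z; (10)%Z; (10)%Z; (4)%Z; (10)%Z; (-8)%Z; (-1)%Z; (4)%Z]);
     (209%Z, [:: (0)%Z; (5)%Z; (-1)%Z; (1)%Z; (1)%Z; (0)%Z; (-5)%Z; (0)%Z; (-1)%Z]);
     (13488%Z, [:: (0)%Z; (1)%Z; (0)%Z; (0)%Z; (0)%Z; (0)%Z; (-1)%Z; (0)%Z; (0)%Z]);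
     (6617%Z, [:: (0)%Z; (0)%Z; (0)%Z; (0)%Z; (1)%Z; (0)%Z; (0)%Z; (0)%Z; (-1)%Z]);
     (392%Z, [:: (0)%Z; (0)%Z; (1)%Z; (-1)%Z; (0)%Z; (0)%Z; (0)%Z; (0)%Z; (0)%Z]);
     (5%Z, [:: (0)%Z; (2)%Z; (10)%Z; (-10)%Z; (6)%Z; (0)%Z; (-2)%Z; (0)%Z; (-6)%Z]);
     (13%Z, [:: (-6)%Z; (-1)%Z; (-9)%Z; (-9)%Z; (2)%Z; (10)%Z; (-1)%Z; (1)%Z; (2)%Z])].

Definition p3_L24 : Z := 97788%Z.

Definition c4_blk0 : seq (Z * seq Z) :=
  [:: (34%Z, [:: (0)%Z; (3)%Z; (3)%Z; (-3)%Z; (0)%Z; (0)%Z; (-3)%Z; (0)%Z; (0)%Z]);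
     (3%Z, [:: (0)%Z; (10)%Z; (10)%Z; (-10)%Z; (0)%Z; (0)%Z; (-10)%Z; (0)%Z; (0)%Z]);
     (3%Z, [:: (-10)%Z; (3)%Z; (3)%Z; (3)%Z; (6)%Z; (2)%Z; (3)%Z; (2)%Z; (6)%Z]);
     (123%Z, [:: (0)%Z; (0)%Z; (0)%Z; (0)%Z; (3)%Z; (0)%Z; (0)%Z; (0)%Z; (-3)%Z]);
     (9%Z, [:: (0)%Z; (0)%Z; (0)%Z; (0)%Z; (10)%Z; (0)%Z; (0)%Z; (0)%Z; (-10)%Z]);
     (68%Z, [:: (-3)%Z; (-5)%Z; (-5)%Z; (-5)%Z; (2)%Z; (4)%Z; (-5)%Z; (4)%Z; (2)%Z]);
     (1973%Z, [:: (0)%Z; (0)%Z; (0)%Z; (0)%Z; (0)%Z; (1)%Z; (0)%Z; (-1)%Z; (0)%Z]);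
     (40%Z, [:: (0)%Z; (0)%Z; (0)%Z; (0)%Z; (5)%Z; (0)%Z; (0)%Z; (0)%Z; (-5)%Z]);
     (223%Z, [:: (0)%Z; (0)%Z; (0)%Z; (0)%Z; (0)%Z; (-3)%Z; (0)%Z; (3)%Z; (0)%Z]);
     (14%Z, [:: (-2)%Z; (-3)%Z; (-3)%Z; (-3)%Z; (1)%Z; (3)%Z; (-3)%Z; (3)%Z; (1)%Z]);
     (20%Z, [:: (0)%Z; (0)%Z; (0)%Z; (0)%Z; (0)%Z; (-10)%Z; (0)%Z; (10)%Z; (0)%Z]);
     (7%Z, [:: (-3)%Z; (1)%Z; (1)%Z; (1)%Z; (2)%Z; (1)%Z; (1)%Z; (1)%Z; (2)%Z]);
     (1037%Z, [:: (0)%Z; (0)%Z; (0)%Z; (0)%Z; (1)%Z; (0)%Z; (0)%Z; (0)%Z; (-1)%Z]);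
     (11%Z, [:: (0)%Z; (5)%Z; (5)%Z; (-5)%Z; (0)%Z; (0)%Z; (-5)%Z; (0)%Z; (0)%Z]);
     (80%Z, [:: (0)%Z; (0)%Z; (0)%Z; (0)%Z; (0)%Z; (-5)%Z; (0)%Z; (5)%Z; (0)%Z])].

Definition c4_blk1 : seq (Z * seq Z) :=
  [:: (9%Z, [:: (0)%Z; (2)%Z; (10)%Z; (-10)%Z; (-10)%Z; (0)%Z; (-2)%Z; (0)%Z; (10)%Z]);
     (54%Z, [:: (0)%Z; (-10)%Z; (1)%Z; (-1)%Z; (-1)%Z; (0)%Z; (10)%Z; (0)%Z; (1)%Z]);
     (39%Z, [:: (3)%Z; (0)%Z; (2)%Z; (2)%Z; (-2)%Z; (-1)%Z; (0)%Z; (2)%Z; (-2)%Z]);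
     (2883%Z, [:: (0)%Z; (0)%Z; (0)%Z; (0)%Z; (0)%Z; (0)%Z; (0)%Z; (1)%Z; (0)%Z]);
     (52%Z, [:: (5)%Z; (6)%Z; (-5)%Z; (-5)%Z; (-2)%Z; (-10)%Z; (6)%Z; (-3)%Z; (-2)%Z]);
     (38%Z, [:: (0)%Z; (1)%Z; (5)%Z; (-5)%Z; (-5)%Z; (0)%Z; (-1)%Z; (0)%Z; (5)%Z]);
     (408%Z, [:: (0)%Z; (-5)%Z; (1)%Z; (-1)%Z; (-1)%Z; (0)%Z; (5)%Z; (0)%Z; (1)%Z]);
     (103%Z, [:: (0)%Z; (1)%Z; (3)%Z; (-3)%Z; (-3)%Z; (0)%Z; (-1)%Z; (0)%Z; (3)%Z]);
     (3238%Z, [:: (0)%Z; (1)%Z; (0)%Z; (0)%Z; (0)%Z; (0)%Z; (-1)%Z; (0)%Z; (0)%Z]);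
     (108%Z, [:: (0)%Z; (0)%Z; (1)%Z; (-1)%Z; (0)%Z; (0)%Z; (0)%Z; (0)%Z; (0)%Z]);
     (44%Z, [:: (-2)%Z; (1)%Z; (-3)%Z; (-3)%Z; (1)%Z; (-1)%Z; (1)%Z; (10)%Z; (1)%Z]);
     (360%Z, [:: (0)%Z; (-3)%Z; (0)%Z; (0)%Z; (0)%Z; (0)%Z; (3)%Z; (0)%Z; (0)%Z])].

Definition c4_L24 : Z := 24744%Z.

Definition sw (t : nat) : nat := match t with 1 => 2 | 2 => 1 | _ => 0 end.

Definition Qsf (b0 b1 : seq (Z * seq Z)) (s k l : nat) : Z :=
  foldr (fun mu acc => (mu.1 * nth 0%Z mu.2 k * nth 0%Z mu.2 l + acc)%Z) 0%Z
    (match s with 0 => b0 | 1 => b1 | _ => [::] end).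

Definition TP3 (g : nat -> nat -> nat) : bool :=
  [&& g 0 1 == 1, g 1 2 == 1 & g 0 2 == 0].
Definition TC4 (g : nat -> nat -> nat) : bool :=
  [&& g 0 1 == 1, g 1 2 == 1, g 2 3 == 1, g 3 0 == 1, g 0 2 == 0 & g 1 3 == 0].

Definition Dsc : Z := 10000%Z.

Definition Fpat (T : (nat -> nat -> nat) -> bool) (b0 b1 : seq (Z * seq Z))
   (g : nat -> nat -> nat) : Z :=
  let s := g 0 1 in let k := 3 * g 0 2 + g 1 2 in let l := 3 * g 0 3 + g 1 3 in
  (6 * Dsc * (if T g then 1 else 0) + Qsf b0 b1 s k l)%Z.

Definition perms4 : seq (seq nat) :=
  [:: [:: 0; 1; 2; 3]; [:: 0; 1; 3; 2]; [:: 0; 2; 1; 3]; [:: 0; 2; 3; 1]; [:: 0; 3; 1; 2]; [:: 0; 3; 2; 1]; [:: 1; 0; 2; 3]; [:: 1; 0; 3; 2]; [:: 1; 2; 0; 3]; [:: 1; 2; 3; 0]; [:: 1; 3; 0; 2]; [:: 1; 3; 2; 0]; [:: 2; 0; 1; 3]; [:: 2; 0; 3; 1]; [:: 2; 1; 0; 3]; [:: 2; 1; 3; 0]; [:: 2; 3; 0; 1]; [:: 2; 3; 1; 0]; [:: 3; 0; 1; 2]; [:: 3; 0; 2; 1]; [:: 3; 1; 0; 2]; [:: 3; 1; 2; 0]; [:: 3; 2; 0; 1]; [:: 3; 2; 1; 0]].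

Definition Fsym T b0 b1 (g : nat -> nat -> nat) : Z :=
  foldr (fun p acc => Z.add (Fpat T b0 b1 (fun i j => g (nth 0 p i) (nth 0 p j))) acc)
     0%Z perms4.

Definition mk (a b c d e f : nat) (i j : nat) : nat :=
  match i, j with
  | 0, 1 => a | 1, 0 => sw a | 0, 2 => b | 2, 0 => sw b | 0, 3 => c | 3, 0 => sw c
  | 1, 2 => d | 2, 1 => sw d | 1, 3 => e | 3, 1 => sw e | 2, 3 => f | 3, 2 => sw f
  | _, _ => 0 end.

Definition tr3 := [:: 0; 1; 2].

Definition chk T b0 b1 (L : Z) : bool :=
  all (fun a => all (fun b => all (fun c => all (fun d => all (fun e => all (fun f =>
     Z.leb (Fsym T b0 b1 (mk a b c d e f)) L) tr3) tr3) tr3) tr3) tr3) tr3.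

Lemma chk_p3 : chk TP3 p3_blk0 p3_blk1 p3_L24. Proof. vm_compute. reflexivity. Qed.
Lemma chk_c4 : chk TC4 c4_blk0 c4_blk1 c4_L24. Proof. vm_compute. reflexivity. Qed.


Lemma foldr_zsum (I : Type) (s : seq I) (F : I -> Z) :
  foldr (fun x acc => (F x + acc)%Z) 0%Z s = \big[Z.add/0%Z]_(x <- s) F x.
Proof. by elim: s => [|x s IH]; rewrite ?big_nil ?big_cons //= IH. Qed.

Lemma perms4_ok : all (fun p => (size p == 4) && all (fun x => x < 4) p &&
   all (fun j => j \in p) (iota 0 4)) perms4.
Proof. by vm_compute. Qed.

Lemma size_perms4 : size perms4 = 24.
Proof. by vm_compute. Qed.

Definition Tloc (T : (nat -> nat -> nat) -> bool) := forall g g',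
  (forall i j, i < 4 -> j < 4 -> g i j = g' i j) -> T g = T g'.

Lemma TP3_loc : Tloc TP3.
Proof. by move=> g g' H; rewrite /TP3 !H. Qed.
Lemma TC4_loc : Tloc TC4.
Proof. by move=> g g' H; rewrite /TC4 !H. Qed.

Lemma Fpat_ext T b0 b1 g g' : Tloc T ->
  (forall i j, i < 4 -> j < 4 -> g i j = g' i j) -> Fpat T b0 b1 g = Fpat T b0 b1 g'.
Proof. by move=> HT H; rewrite /Fpat (HT g g' H) !H. Qed.

Lemma Fsym_E T b0 b1 g : Fsym T b0 b1 g =
  \big[Z.add/0%Z]_(p <- perms4) Fpat T b0 b1 (fun i j => g (nth 0 p i) (nth 0 p j)).
Proof. by rewrite /Fsym foldr_zsum. Qed.

Lemma perms4_lt p i : p \in perms4 -> i < 4 -> nth 0 p i < 4.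
Proof.
move=> Hp Hi; move/allP: perms4_ok => /(_ p Hp) /andP[/andP[/eqP Hs Ha] _].
by apply: (allP Ha); apply: mem_nth; rewrite Hs.
Qed.

Lemma Fsym_ext T b0 b1 g g' : Tloc T ->
  (forall i j, i < 4 -> j < 4 -> g i j = g' i j) -> Fsym T b0 b1 g = Fsym T b0 b1 g'.
Proof.
move=> HT H; rewrite !Fsym_E; apply: eq_big_seq => p Hp.
by apply: Fpat_ext => // i j Hi Hj; apply: H; apply: perms4_lt.
Qed.

Lemma chkP T b0 b1 L : chk T b0 b1 L -> Tloc T -> forall g,
  (forall i j, i < 4 -> j < 4 -> g i j = mk (g 0 1) (g 0 2) (g 0 3) (g 1 2) (g 1 3) (g 2 3) i j) ->
  g 0 1 \in tr3 -> g 0 2 \in tr3 -> g 0 3 \in tr3 -> g 1 2 \in tr3 -> g 1 3 \in tr3 ->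
  g 2 3 \in tr3 -> (Fsym T b0 b1 g <= L)%Z.
Proof.
move=> Hc HT g Hg H1 H2 H3 H4 H5 H6.
rewrite (Fsym_ext _ _ HT Hg).
move: Hc; rewrite /chk.
move/allP/(_ _ H1)/allP/(_ _ H2)/allP/(_ _ H3)/allP/(_ _ H4)/allP/(_ _ H5)/allP/(_ _ H6).
by move/Z.leb_le.
Qed.

Section Graph.
Variables (n : nat) (G : digraph n).
Hypothesis HG : is_orgraph G.

Definition adj (x y : 'I_n) : bool := (x, y) \in G.
Definition tri (x y : 'I_n) : nat := if adj x y then 1 else if adj y x then 2 else 0.

Lemma orgP x y : adj x y -> (x != y) && ~~ adj y x.
Proof. by move: HG => /forallP/(_ x)/forallP/(_ y)/implyP. Qed.

Lemma tri_xx x : tri x x = 0.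
Proof.
rewrite /tri; case: (boolP (adj x x)) => // /orgP.
by rewrite eqxx.
Qed.

Lemma tri_sw x y : tri y x = sw (tri x y).
Proof.
rewrite /tri; case Hxy: (adj x y); case Hyx: (adj y x) => //.
by have /andP[_] := orgP Hxy; rewrite Hyx.
Qed.

Lemma tri_tr3 x y : tri x y \in tr3.
Proof. by rewrite /tri; case: (adj x y); case: (adj y x). Qed.

Definition tw (w : {ffun 'I_4 -> 'I_n}) (i j : nat) : nat :=
  tri (w (inord i)) (w (inord j)).

Lemma tw_mk w i j : i < 4 -> j < 4 ->
  tw w i j = mk (tw w 0 1) (tw w 0 2) (tw w 0 3) (tw w 1 2) (tw w 1 3) (tw w 2 3) i j.
Proof.
case: i => [|[|[|[|i]]]] // _; case: j => [|[|[|[|j]]]] // _;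
  rewrite /= /tw ?tri_xx //; by rewrite tri_sw.
Qed.

Lemma Fsym_le T b0 b1 L : chk T b0 b1 L -> Tloc T -> forall w,
  (Fsym T b0 b1 (tw w) <= L)%Z.
Proof.
move=> Hc HT w; apply: (chkP Hc HT); [exact: tw_mk | exact: tri_tr3 ..].
Qed.

Definition perm_ff (p : seq nat) (w : {ffun 'I_4 -> 'I_n}) : {ffun 'I_4 -> 'I_n} :=
  [ffun i : 'I_4 => w (inord (nth 0 p i))].

Lemma perm_ff_inj p : p \in perms4 -> injective (perm_ff p).
Proof.
move=> Hp w1 w2 E; apply/ffunP => j.
move/allP: perms4_ok => /(_ p Hp) /andP[/andP[/eqP Hs _] Hall].
have jp : (nat_of_ord j) \in p by apply: (allP Hall); rewrite mem_iota /= add0n ltn_ord.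
have Hi : index (nat_of_ord j) p < 4 by move: jp; rewrite -index_mem Hs.
have := congr1 (fun f : {ffun 'I_4 -> 'I_n} => f (inord (index (nat_of_ord j) p))) E.
by rewrite /perm_ff !ffunE inordK // nth_index // inord_val.
Qed.

Lemma tw_perm p w i j : i < 4 -> j < 4 ->
  tw (perm_ff p w) i j = tw w (nth 0 p i) (nth 0 p j).
Proof. by move=> Hi Hj; rewrite /tw /perm_ff !ffunE !inordK. Qed.

Lemma sum_Fsym T b0 b1 : Tloc T ->
  \big[Z.add/0%Z]_(w : {ffun 'I_4 -> 'I_n}) Fsym T b0 b1 (tw w) =
  (24 * \big[Z.add/0%Z]_(w : {ffun 'I_4 -> 'I_n}) Fpat T b0 b1 (tw w))%Z.
Proof.
move=> HT.
under eq_bigr => w _ do rewrite Fsym_E.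
rewrite exchange_big /=.
rewrite (eq_big_seq (fun _ => \big[Z.add/0%Z]_(w : {ffun 'I_4 -> 'I_n}) Fpat T b0 b1 (tw w))).
  by rewrite zsum_const_seq size_perms4.
move=> p Hp.
rewrite [RHS](reindex_inj (perm_ff_inj Hp)) /=.
apply: eq_bigr => w _; apply: Fpat_ext => // i j Hi Hj.
by rewrite tw_perm.
Qed.


End Graph.

Lemma sos1 (X : finType) (m : Z) (u : X -> Z) : (0 <= m)%Z ->
  (0 <= \big[Z.add/0%Z]_(c : X) \big[Z.add/0%Z]_(d : X) (m * u c * u d)%Z)%Z.
Proof.
move=> Hm.
have -> : \big[Z.add/0%Z]_(c : X) \big[Z.add/0%Z]_(d : X) (m * u c * u d)%Z =
   (m * (\big[Z.add/0%Z]_(c : X) u c) * \big[Z.add/0%Z]_(d : X) u d)%Z.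
  rewrite (big_distrr m) /= (big_distrl (\big[Z.add/0%Z]_(d : X) u d)) /=.
  by apply: eq_bigr => c _; rewrite big_distrr.
set s := \big[Z.add/0%Z]_(c : X) _; nia.
Qed.

Lemma sos_ge0 (X : finType) (B : seq (Z * seq Z)) (xf : X -> nat) :
  all (fun mu => (0 <=? mu.1)%Z) B ->
  (0 <= \big[Z.add/0%Z]_(c : X) \big[Z.add/0%Z]_(d : X)
     \big[Z.add/0%Z]_(mu <- B) (mu.1 * nth 0%Z mu.2 (xf c) * nth 0%Z mu.2 (xf d)))%Z.
Proof.
move=> HB.
under eq_bigr => c _ do rewrite exchange_big.
rewrite exchange_big.
elim: B HB => [|mu B IH]; first by rewrite big_nil.
move=> /= /andP[/Z.leb_le Hm HB]; rewrite big_cons.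
apply: Z.add_nonneg_nonneg; last exact: IH.
exact: (@sos1 X mu.1 (fun c => nth 0%Z mu.2 (xf c)) Hm).
Qed.

Definition blk (b0 b1 : seq (Z * seq Z)) (s : nat) :=
  match s with 0 => b0 | 1 => b1 | _ => [::] end.

Lemma Qsf_E b0 b1 s k l : Qsf b0 b1 s k l =
  \big[Z.add/0%Z]_(mu <- blk b0 b1 s) (mu.1 * nth 0%Z mu.2 k * nth 0%Z mu.2 l)%Z.
Proof. by rewrite /Qsf foldr_zsum. Qed.

Lemma blk_ok b0 b1 s : all (fun mu => (0 <=? mu.1)%Z) (b0 ++ b1) ->
  all (fun mu => (0 <=? mu.1)%Z) (blk b0 b1 s).
Proof.
rewrite all_cat => /andP[H0 H1]; case: s => [|[|s]] //=.
Qed.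

Section Graph2.
Variables (n : nat) (G : digraph n).
Hypothesis HG : is_orgraph G.

Definition zb (b : bool) : Z := if b then 1%Z else 0%Z.

Lemma sum_Fpat T b0 b1 : all (fun mu => (0 <=? mu.1)%Z) (b0 ++ b1) ->
  (6 * Dsc * \big[Z.add/0%Z]_(w : {ffun 'I_4 -> 'I_n}) zb (T (tw G w)) <=
   \big[Z.add/0%Z]_(w : {ffun 'I_4 -> 'I_n}) Fpat T b0 b1 (tw G w))%Z.
Proof.
move=> Hb.
have -> : \big[Z.add/0%Z]_(w : {ffun 'I_4 -> 'I_n}) Fpat T b0 b1 (tw G w) =
  (6 * Dsc * \big[Z.add/0%Z]_(w : {ffun 'I_4 -> 'I_n}) zb (T (tw G w)) +
   \big[Z.add/0%Z]_(w : {ffun 'I_4 -> 'I_n})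
    Qsf b0 b1 (tw G w 0 1) (3 * tw G w 0 2 + tw G w 1 2) (3 * tw G w 0 3 + tw G w 1 3))%Z.
  rewrite big_distrr -big_split; apply: eq_bigr => w _; by [].
suff : (0 <= \big[Z.add/0%Z]_(w : {ffun 'I_4 -> 'I_n})
    Qsf b0 b1 (tw G w 0 1) (3 * tw G w 0 2 + tw G w 1 2) (3 * tw G w 0 3 + tw G w 1 3))%Z.
  lia.
pose h (a b c d : 'I_n) := Qsf b0 b1 (tri G a b) (3 * tri G a c + tri G b c) (3 * tri G a d + tri G b d).
have -> := sum_ffun4 Z.add h.
apply: zsum_ge0 => a _; apply: zsum_ge0 => b _.
rewrite /h; under eq_bigr => c _ do under eq_bigr => d _ do rewrite Qsf_E.
refine (@sos_ge0 _ (blk b0 b1 (tri G a b)) (fun c => 3 * tri G a c + tri G b c) _).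
exact: (@blk_ok b0 b1 (tri G a b) Hb).
Qed.

End Graph2.


Definition Wit n (G : digraph n) k (Gam : digraph k) : {set {ffun 'I_k -> 'I_n}} :=
  [set f : {ffun 'I_k -> 'I_n} | injectiveb f && [forall i, forall j, ((f i, f j) \in G) == ((i, j) \in Gam)]].

Lemma ind_le_wit n (G : digraph n) k (Gam : digraph k) : ind_count Gam G <= #|Wit G Gam|.
Proof.
rewrite /ind_count.
apply: leq_trans (leq_imset_card (fun f : {ffun 'I_k -> 'I_n} => f @: [set: 'I_k]) (Wit G Gam)).
apply: subset_leq_card; apply/fintype.subsetP => T.
rewrite inE => /andP[_ /existsP[f /and3P[Hi /eqP Hf He]]].
by apply/imsetP; exists f; [rewrite inE Hi He | rewrite Hf].
Qed.

Lemma WitP n (G : digraph n) k (Gam : digraph k) f : f \in Wit G Gam ->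
  forall i j, adj G (f i) (f j) = ((i, j) \in Gam).
Proof.
by rewrite inE => /andP[_ /forallP H] i j; move: (H i) => /forallP/(_ j)/eqP.
Qed.

Lemma card_zsum (T : finType) (A : {set T}) :
  Z.of_nat #|A| = \big[Z.add/0%Z]_(x : T) zb (x \in A).
Proof.
rewrite -sum1_card big_mkcond zsum_nat; apply: eq_bigr => x _.
by rewrite /zb; case: (x \in A).
Qed.

Section Graph3.
Variables (n : nat) (G : digraph n).
Hypothesis HG : is_orgraph G.

Lemma card_ffun4 : Z.of_nat #|{ffun 'I_4 -> 'I_n}| = (Z.of_nat n * Z.of_nat n * Z.of_nat n * Z.of_nat n)%Z.
Proof. by rewrite card_ffun !card_ord !expnS expn0 muln1 !Nat2Z.inj_mul; lia. Qed.

Lemma main_bound T b0 b1 L : chk T b0 b1 L -> Tloc T ->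
  all (fun mu => (0 <=? mu.1)%Z) (b0 ++ b1) ->
  (24 * (6 * Dsc * \big[Z.add/0%Z]_(w : {ffun 'I_4 -> 'I_n}) zb (T (tw G w))) <=
   Z.of_nat n * Z.of_nat n * Z.of_nat n * Z.of_nat n * L)%Z.
Proof.
move=> Hc HT Hb.
have H1 := @sum_Fpat n G T b0 b1 Hb.
have H2 := @sum_Fsym n G T b0 b1 HT.
have H3 : (\big[Z.add/0%Z]_(w : {ffun 'I_4 -> 'I_n}) Fsym T b0 b1 (tw G w) <=
           \big[Z.add/0%Z]_(w : {ffun 'I_4 -> 'I_n}) L)%Z.
  by apply: zsum_le => w _; apply: (@Fsym_le n G HG T b0 b1 L Hc HT).
rewrite zsum_const card_ffun4 in H3.
lia.
Qed.

Lemma P3_wit_T f : f \in Wit G P3 ->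
  [&& tri G (f (inord 0)) (f (inord 1)) == 1, tri G (f (inord 1)) (f (inord 2)) == 1
     & tri G (f (inord 0)) (f (inord 2)) == 0].
Proof. by move=> Hf; rewrite /tri !(WitP Hf) /P3 !inE !xpair_eqE -!val_eqE /= !inordK. Qed.

Lemma C4_wit_T f : f \in Wit G C4 -> TC4 (tw G f).
Proof. by move=> Hf; rewrite /TC4 /tw /tri !(WitP Hf) /C4 !inE !xpair_eqE -!val_eqE /= !inordK. Qed.

Lemma sumT_P3 : (Z.of_nat n * Z.of_nat #|Wit G P3| <=
   \big[Z.add/0%Z]_(w : {ffun 'I_4 -> 'I_n}) zb (TP3 (tw G w)))%Z.
Proof.
pose h (a b c d : 'I_n) := zb [&& tri G a b == 1, tri G b c == 1 & tri G a c == 0].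
have -> := sum_ffun4 Z.add h.
pose h3 (a b c : 'I_n) := zb [&& tri G a b == 1, tri G b c == 1 & tri G a c == 0].
have E : \big[Z.add/0%Z]_a \big[Z.add/0%Z]_b \big[Z.add/0%Z]_c \big[Z.add/0%Z]_d h a b c d =
   (Z.of_nat n * \big[Z.add/0%Z]_a \big[Z.add/0%Z]_b \big[Z.add/0%Z]_c h3 a b c)%Z.
  rewrite big_distrr; apply: eq_bigr => a _.
  rewrite big_distrr; apply: eq_bigr => b _.
  rewrite big_distrr; apply: eq_bigr => c _.
  by rewrite /h /h3 zsum_const card_ord.
rewrite E -(sum_ffun3 Z.add h3) card_zsum.
apply: Z.mul_le_mono_nonneg_l; first lia.
apply: zsum_le => f _; rewrite /h3 /zb.
case: (boolP (f \in Wit G P3)) => [Hf|_]; first by rewrite (P3_wit_T Hf).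
by case: ifP.
Qed.

Lemma sumT_C4 : (Z.of_nat #|Wit G C4| <=
   \big[Z.add/0%Z]_(w : {ffun 'I_4 -> 'I_n}) zb (TC4 (tw G w)))%Z.
Proof.
rewrite card_zsum; apply: zsum_le => f _; rewrite /zb.
case: (boolP (f \in Wit G C4)) => [Hf|_]; first by rewrite (C4_wit_T Hf).
by case: ifP.
Qed.

End Graph3.


Definition rot (r i : 'I_4) : 'I_4 := Ordinal (@ltn_pmod (i + r) 4 isT).

Lemma memC4 (i j : 'I_4) : ((i, j) \in C4) = (val j == (val i + 1) %% 4).
Proof.
rewrite /C4 !inE !xpair_eqE -!val_eqE /= !inordK //.
by case: i => [[|[|[|[|i]]]] Hi] //; case: j => [[|[|[|[|j]]]] Hj].
Qed.

Lemma rotC4 r i j : ((rot r i, rot r j) \in C4) = ((i, j) \in C4).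
Proof.
rewrite !memC4.
by case: r => [[|[|[|[|r]]]] Hr] //; case: i => [[|[|[|[|i]]]] Hi] //;
  case: j => [[|[|[|[|j]]]] Hj].
Qed.

Lemma rot_inj r : injective (rot r).
Proof.
move=> i j /(congr1 val) /=.
by case: r => [[|[|[|[|r]]]] Hr] //; case: i => [[|[|[|[|i]]]] Hi] //;
  case: j => [[|[|[|[|j]]]] Hj] //= _; apply: val_inj.
Qed.

Lemma rot0 r : rot r ord0 = r.
Proof. by apply: val_inj; rewrite /= add0n modn_small. Qed.

Definition rotf n (f : {ffun 'I_4 -> 'I_n}) (r : 'I_4) : {ffun 'I_4 -> 'I_n} :=
  [ffun i => f (rot r i)].

Section Graph4.
Variables (n : nat) (G : digraph n).

Lemma rotf_wit (f : {ffun 'I_4 -> 'I_n}) r : f \in Wit G C4 -> rotf f r \in Wit G C4.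
Proof.
move=> Hf; have Hf' := WitP Hf.
move: Hf; rewrite !inE => /andP[/injectiveP Hinj _].
apply/andP; split.
  apply/injectiveP => i j; rewrite !ffunE => /Hinj; exact: rot_inj.
apply/forallP => i; apply/forallP => j; rewrite !ffunE.
by have := Hf' (rot r i) (rot r j); rewrite /adj rotC4 => ->.
Qed.

Lemma rotf_img (f : {ffun 'I_4 -> 'I_n}) r : rotf f r @: [set: 'I_4] = f @: [set: 'I_4].
Proof.
have E : rot r @: [set: 'I_4] = [set: 'I_4].
  by apply/eqP; rewrite eqEcard finset.subsetT (card_imset _ (@rot_inj r)) leqnn.
rewrite -[in RHS]E -imset_comp; apply: eq_imset => i; by rewrite ffunE.
Qed.

Lemma fiber4 (f : {ffun 'I_4 -> 'I_n}) : f \in Wit G C4 ->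
  4 <= #|[set g in Wit G C4 | g @: [set: 'I_4] == f @: [set: 'I_4]]|.
Proof.
move=> Hf.
have Hinj : injective (rotf f).
  move: (Hf); rewrite inE => /andP[/injectiveP Hi _].
  move=> r r' /(congr1 (fun g : {ffun 'I_4 -> 'I_n} => g ord0)); rewrite !ffunE.
  by move/Hi; rewrite !rot0.
have H4 : #|rotf f @: [set: 'I_4]| = 4 by rewrite card_imset // cardsT card_ord.
apply: leq_trans (eq_leq (esym H4)) _.
apply: subset_leq_card; apply/fintype.subsetP => g /imsetP[r _ ->].
by rewrite inE rotf_wit // rotf_img eqxx.
Qed.

Lemma ind_le_wit4 : 4 * ind_count C4 G <= #|Wit G C4|.
Proof.
rewrite /ind_count.
set S := [set T : {set 'I_n} | _].
have -> : #|Wit G C4| = \sum_(T : {set 'I_n})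
    #|[set g in Wit G C4 | g @: [set: 'I_4] == T]|.
  rewrite -sum1_card (partition_big (fun g : {ffun 'I_4 -> 'I_n} => g @: [set: 'I_4]) xpredT) //=.
  by apply: eq_bigr => T _; rewrite -sum1_card; apply: eq_bigl => g; rewrite inE.
rewrite mulnC -sum_nat_const.
apply: leq_trans (_ : \sum_(T in S) #|[set g in Wit G C4 | g @: [set: 'I_4] == T]| <= _).
  apply: leq_sum => T; rewrite inE => /andP[_ /existsP[f /and3P[Hi /eqP Hf He]]].
  have Hw : f \in Wit G C4 by rewrite inE Hi He.
  by rewrite -Hf; apply: fiber4.
rewrite [X in _ <= X](bigID (fun T => T \in S)) /=; exact: leq_addr.
Qed.

End Graph4.



From mathcomp Require Import zify.

Lemma max_bound k (Gam : digraph k) n (c K : Z) : (0 <= K)%Z -> (0 <= c)%Z ->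
  (forall G : digraph n, is_orgraph G -> (Z.of_nat (ind_count Gam G) * c <= K)%Z) ->
  (Z.of_nat (max_ind Gam n) * c <= K)%Z.
Proof.
move=> HK Hc H; rewrite /max_ind.
apply: (big_ind (fun x => (Z.of_nat x * c <= K)%Z)) => //.
by move=> x y Hx Hy; case: (leqP x y).
Qed.

Lemma blk_p3_ok : all (fun mu => (0 <=? mu.1)%Z) (p3_blk0 ++ p3_blk1).
Proof. by vm_compute. Qed.
Lemma blk_c4_ok : all (fun mu => (0 <=? mu.1)%Z) (c4_blk0 ++ c4_blk1).
Proof. by vm_compute. Qed.

Lemma P3_n (n : nat) : (0 < n)%nat ->
  (Z.of_nat (max_ind P3 n) * 1440000 <= Z.of_nat n * Z.of_nat n * Z.of_nat n * 97788)%Z.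
Proof.
move=> Hn; apply: max_bound; [nia | lia | ].
move=> G HG.
have H1 := @main_bound n G HG _ _ _ _ chk_p3 TP3_loc blk_p3_ok.
have H2 := @sumT_P3 n G.
have H3 := @ind_le_wit n G 3 P3.
rewrite /Dsc /p3_L24 in H1.
set S := \big[Z.add/0%Z]_(w : {ffun 'I_4 -> 'I_n}) zb (TP3 (tw G w)) in H1 H2.
set W := #|Wit G P3| in H2 H3.
set I := ind_count P3 G in H3 *.
have Hx : (0 < Z.of_nat n)%Z by lia.
apply (proj2 (Z.mul_le_mono_pos_l _ _ _ Hx)).
have : (Z.of_nat I <= Z.of_nat W)%Z by lia.
nia.
Qed.

Lemma C4_n (n : nat) : (0 < n)%nat ->
  (Z.of_nat (max_ind C4 n) * 5760000 <= Z.of_nat n * Z.of_nat n * Z.of_nat n * Z.of_nat n * 24744)%Z.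
Proof.
move=> Hn; apply: max_bound; [nia | lia | ].
move=> G HG.
have H1 := @main_bound n G HG _ _ _ _ chk_c4 TC4_loc blk_c4_ok.
have H2 := @sumT_C4 n G.
have H3 := @ind_le_wit4 n G.
rewrite /Dsc /c4_L24 in H1.
lia.
Qed.


Lemma binZ3 (k : nat) : (3 <= k)%nat ->
  (Z.of_nat 'C(k, 3) * 6 = Z.of_nat k * (Z.of_nat k - 1) * (Z.of_nat k - 2))%Z.
Proof.
move=> Hk; have := bin_ffact k 3; rewrite !ffactnS ffactn0 /=.
rewrite -!subn1 muln1 => E.
have E' := f_equal Z.of_nat E.
rewrite !Nat2Z.inj_mul !Nat2Z.inj_sub in E'; lia.
Qed.

Lemma binZ4 (k : nat) : (4 <= k)%nat ->
  (Z.of_nat 'C(k, 4) * 24 = Z.of_nat k * (Z.of_nat k - 1) * (Z.of_nat k - 2) * (Z.of_nat k - 3))%Z.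
Proof.
move=> Hk; have := bin_ffact k 4; rewrite !ffactnS ffactn0 /=.
rewrite -!subn1 muln1 => E.
have E' := f_equal Z.of_nat E.
rewrite !Nat2Z.inj_mul !Nat2Z.inj_sub in E'; lia.
Qed.

Lemma P3_nat (k : nat) : (100 <= k)%nat -> (max_ind P3 k * 10000 <= 4446 * 'C(k, 3))%nat.
Proof.
move=> Hk.
apply/leP/Nat2Z.inj_le; rewrite !Nat2Z.inj_mul.
have -> : Z.of_nat 10000 = 10000%Z by reflexivity.
have -> : Z.of_nat 4446 = 4446%Z by reflexivity.
have Hk0 : (0 < k)%nat by lia.
have Hk3 : (3 <= k)%nat by lia.
have H1 := P3_n Hk0.
have H2 := binZ3 Hk3.
move: H1 H2.
generalize (Z.of_nat (max_ind P3 k)) (Z.of_nat 'C(k, 3)) => m c.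
have Hx : (100 <= Z.of_nat k)%Z by lia.
move: Hx; generalize (Z.of_nat k) => x Hx H1 H2.
have A : (586728 * (x * x) <= 640224 * ((x - 1) * (x - 2)))%Z by nia.
have B : (586728 * (x * x * x) <= 640224 * (x * (x - 1) * (x - 2)))%Z.
  have : (0 <= x)%Z by lia.
  move=> H0; have := Z.mul_le_mono_nonneg_l _ _ x H0 A; lia.
lia.
Qed.


Lemma C4_nat (k : nat) : (200 <= k)%nat -> (max_ind C4 k * 10000 <= 1104 * 'C(k, 4))%nat.
Proof.
move=> Hk.
apply/leP/Nat2Z.inj_le; rewrite !Nat2Z.inj_mul.
have -> : Z.of_nat 10000 = 10000%Z by reflexivity.
have -> : Z.of_nat 1104 = 1104%Z by reflexivity.
have Hk0 : (0 < k)%nat by lia.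
have Hk4 : (4 <= k)%nat by lia.
have H1 := C4_n Hk0.
have H2 := binZ4 Hk4.
move: H1 H2.
generalize (Z.of_nat (max_ind C4 k)) (Z.of_nat 'C(k, 4)) => m c.
have Hx : (200 <= Z.of_nat k)%Z by lia.
move: Hx; generalize (Z.of_nat k) => x Hx H1 H2.
have A0 : (200 * (x * x) <= x * x * x)%Z.
  have H0 : (0 <= x * x)%Z by nia.
  have := Z.mul_le_mono_nonneg_l _ _ (x * x) H0 Hx; lia.
have A : (593856 * (x * x * x) <= 635904 * ((x - 1) * (x - 2) * (x - 3)))%Z.
  have : (40000 <= x * x)%Z by nia.
  lia.
have B : (593856 * (x * x * x * x) <= 635904 * (x * (x - 1) * (x - 2) * (x - 3)))%Z.
  have H0 : (0 <= x)%Z by lia.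
  have := Z.mul_le_mono_nonneg_l _ _ x H0 A; lia.
lia.
Qed.

Import Order.TTheory GRing.Theory Num.Theory.

Section Real.
Local Open Scope ring_scope.

Lemma ratio_le (R : realType) (m c a b : nat) : (0 < c)%nat -> (0 < b)%nat ->
  (m * b <= a * c)%nat -> (m%:R / c%:R <= (a%:R / b%:R : R)).
Proof.
move=> Hc Hb H.
rewrite ler_pdivrMr ?ltr0n // mulrAC ler_pdivlMr ?ltr0n // -!natrM ler_nat.
by [].
Qed.

End Real.

Local Open Scope ring_scope.
Local Open Scope ereal_scope.

Lemma limsup_le (R : realType) (u : nat -> R) (c : R) (N0 : nat) :
  (forall k, (N0 <= k)%nat -> u k <= c)%R ->
  limn_esup (fun k => (u k)%:E) <= c%:E.
Proof.
move=> H; rewrite /limn_esup /limf_esup.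
apply: le_trans (ereal_inf_lbound _) _.
  exists [set k : nat | (N0 <= k)%nat]%classic => //; exists N0 => //.
apply: ge_ereal_sup => _ [k /= hk <-]; rewrite lee_fin; exact: H.
Qed.

Theorem theorem2 (R : realType) :
  inducibility R P3 <= ((4446%:R / 10000%:R : R))%:E /\
  inducibility R C4 <= ((1104%:R / 10000%:R : R))%:E.
Proof.
split.
- apply: (limsup_le (N0 := 100)) => k Hk.
  apply: ratio_le => //; last exact: P3_nat.
  by rewrite bin_gt0; apply: leq_trans Hk.
- apply: (limsup_le (N0 := 200)) => k Hk.
  apply: ratio_le => //; last exact: C4_nat.
  by rewrite bin_gt0; apply: leq_trans Hk.
Qed.
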